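(* Let $m>n$ be coprime positive integers. The orbit of $\Lambda_0=(m(n-1),\dots,m,0\,|\,0,n,\dots,n(m-1))$ under the Weyl groupoid action on $\mathbb Z^{n|m}$ contains $\Lambda_1=(0,1,\dots,n-1\,|\,0,1,\dots,m-1)$.
   Context: Elements of $\mathbb Z^{n|m}$ are written $(a_1,\dots,a_n|b_1,\dots,b_m)$, identified with $\sum_ia_i\epsilon_i-\sum_jb_j\delta_j$. The Weyl groupoid action is generated by the permutations of $a_1,\dots,a_n$ among themselves and of $b_1,\dots,b_m$ among themselves, and, for $\alpha=\epsilon_i-\delta_j$, by $\tau_\alpha:\Pi_\alpha\to\Pi_{-\alpha}$, $\Lambda\mapsto\Lambda+n\epsilon_i-m\delta_j$ (add $n$ to $a_i$ and $m$ to $b_j$), and $\tau_{-\alpha}=\tau_\alpha^{-1}$, where $\Pi_\alpha=\{a_i=b_j\}$ and $\Pi_{-\alpha}=\{a_i-b_j=n-m\}$. The orbit of $\Lambda_0$ is the set of elements reachable from $\Lambda_0$ by finite sequences of these operations, each applied on its domain. *)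

(* Defs.v *)
From HB Require Import structures.
From mathcomp Require Import all_boot all_order all_algebra all_fingroup.
From Stdlib Require Import Relations.
Set Implicit Arguments. Unset Strict Implicit. Unset Printing Implicit Defensive.
Import Order.TTheory GRing.Theory Num.Theory.
Local Open Scope ring_scope.

(* An element (a_1..a_n | b_1..b_m) of Z^{n|m}, identified with
   sum_i a_i eps_i - sum_j b_j delta_j. Indices are 0-based. *)
Definition Zsup (n m : nat) : Type := ({ffun 'I_n -> int} * {ffun 'I_m -> int})%type.

Inductive weyl_step (n m : nat) : Zsup n m -> Zsup n m -> Prop :=
| ws_perm_a (s : {perm 'I_n}) (a : {ffun 'I_n -> int}) (b : {ffun 'I_m -> int}) :
    weyl_step (a, b) ([ffun k => a (s k)], b)
| ws_perm_b (s : {perm 'I_m}) (a : {ffun 'I_n -> int}) (b : {ffun 'I_m -> int}) :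
    weyl_step (a, b) (a, [ffun k => b (s k)])
(* tau_alpha, alpha = eps_i - delta_j, defined on Pi_alpha = {a_i = b_j} *)
| ws_tau (i : 'I_n) (j : 'I_m) (a : {ffun 'I_n -> int}) (b : {ffun 'I_m -> int}) :
    a i = b j ->
    weyl_step (a, b)
      ([ffun k => if k == i then a k + n%:Z else a k],
       [ffun k => if k == j then b k + m%:Z else b k])
(* tau_{-alpha} = tau_alpha^{-1}, defined on Pi_{-alpha} = {a_i - b_j = n - m} *)
| ws_tau_inv (i : 'I_n) (j : 'I_m) (a : {ffun 'I_n -> int}) (b : {ffun 'I_m -> int}) :
    a i - b j = n%:Z - m%:Z ->
    weyl_step (a, b)
      ([ffun k => if k == i then a k - n%:Z else a k],
       [ffun k => if k == j then b k - m%:Z else b k]).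

Definition in_weyl_orbit (n m : nat) (L0 L : Zsup n m) : Prop :=
  clos_refl_trans (Zsup n m) (@weyl_step n m) L0 L.

Definition Lambda0 (n m : nat) : Zsup n m :=
  ([ffun k : 'I_n => (m * (n - 1 - k))%N%:Z], [ffun k : 'I_m => (n * k)%N%:Z]).

Definition Lambda1 (n m : nat) : Zsup n m :=
  ([ffun k : 'I_n => (k : nat)%:Z], [ffun k : 'I_m => (k : nat)%:Z]).

(* Main.v *)
Require Import Defs.
From mathcomp Require Import all_boot all_order all_algebra all_fingroup.
From mathcomp Require Import zify.
From Stdlib Require Import Relations.
Set Implicit Arguments.
Import GRing.Theory Num.Theory.

Fixpoint Aval (p : nat) (g : nat -> bool) (t r : nat) : nat :=
  if t is t'.+1 then
    (if g t' && (r == t' %% p) then Aval p g t' r + p else Aval p g t' r)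
  else r.

Lemma cl_iter p (g : nat -> bool) (hcl : forall x, ~~ g x -> ~~ g (x + p)) y k :
  ~~ g y -> ~~ g (y + k * p).
Proof.
elim: k => [|k IH] H; first by rewrite addn0.
by rewrite mulSn addnCA addnC; apply: hcl; apply: IH.
Qed.

Lemma cl_mod p (g : nat -> bool) (hcl : forall x, ~~ g x -> ~~ g (x + p)) y t :
  ~~ g y -> y <= t -> y %% p = t %% p -> ~~ g t.
Proof.
move=> Hy Hyt Hm.
have : p %| t - y by rewrite -eqn_mod_dvd // Hm.
case/dvdnP => k Hk.
have -> : t = y + k * p by rewrite -Hk; lia.
exact: cl_iter.
Qed.

Lemma mod_win p t y : t <= y -> y < t + p -> y %% p = t %% p -> y = t.
Proof.
move=> h1 h2 Hm.
have : p %| y - t by rewrite -eqn_mod_dvd // Hm.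
case/dvdnP => k Hk.
have : k * p < p by lia.
case: k Hk => [|k] Hk; first by lia.
move=> h; have : p <= k.+1 * p by rewrite mulSn leq_addr.
lia.
Qed.

Lemma Aval_inv p g (hp : 0 < p) (hcl : forall x, ~~ g x -> ~~ g (x + p)) t r :
  r < p ->
  [/\ Aval p g t r %% p = r,
      (Aval p g t r < t /\ ~~ g (Aval p g t r)) \/ (t <= Aval p g t r < t + p) &
      (Aval p g t r < p) \/ g (Aval p g t r - p)].
Proof.
move=> hr; elim: t => [|t [IH1 IH2 IH3]] /=.
  by split; [rewrite modn_small | right; rewrite add0n hr | left].
set y := Aval p g t r in IH1 IH2 IH3 *.
case: ifP => [/andP [Hg /eqP Hr]|Hn].
  have yt : y = t.
    case: IH2 => [[h1 h2]|/andP [h1 h2]].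
      by move: (@cl_mod p g hcl _ _ h2 (ltnW h1) (etrans IH1 Hr)); rewrite Hg.
    by apply: (mod_win p) => //; rewrite IH1.
  rewrite yt; split.
  - by rewrite modnDr -Hr.
  - right; apply/andP; split; lia.
  - by right; rewrite addnK.
split => //.
case: IH2 => [[h1 h2]|/andP [h1 h2]]; first by left; split => //; lia.
case: (ltngtP t y) => h3.
- by right; apply/andP; split; lia.
- lia.
- left; split; first lia.
  rewrite -h3; apply/negP => Hg.
  by move: Hn; rewrite Hg h3 IH1 eqxx.
Qed.

Lemma Aval_gap p g (hp : 0 < p) (hcl : forall x, ~~ g x -> ~~ g (x + p)) t :
  g t -> Aval p g t (t %% p) = t.
Proof.
move=> Hg.
have [IH1 IH2 _] := @Aval_inv p g hp hcl t _ (ltn_pmod t hp).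
case: IH2 => [[h1 h2]|/andP [h1 h2]].
  by move: (@cl_mod p g hcl _ _ h2 (ltnW h1) IH1); rewrite Hg.
by apply: (mod_win p) => //; rewrite IH1 ?modn_mod.
Qed.

Lemma Aval_step_same p g t r : ~~ g t -> Aval p g t.+1 r = Aval p g t r.
Proof. by move=> /negbTE H /=; rewrite H. Qed.

Definition inS (p q x : nat) : bool :=
  [exists i : 'I_x.+1, exists j : 'I_x.+1, x == p * i + q * j].

Lemma inSP p q x : 0 < p -> 0 < q ->
  reflect (exists i j, x = p * i + q * j) (inS p q x).
Proof.
move=> hp hq; apply: (iffP existsP).
  by case=> i /existsP [j /eqP H]; exists i, j.
case=> i [j H].
have hi : i < x.+1 by nia.
have hj : j < x.+1 by nia.
by exists (Ordinal hi); apply/existsP; exists (Ordinal hj); apply/eqP.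
Qed.

Lemma frob p q x : 0 < p -> 0 < q -> coprime p q -> (q - 1) * p <= x ->
  exists i j, x = p * i + q * j.
Proof.
move=> hp hq cop hx.
set c := chinese p q 0 x.
set z := c %% (p * q).
have zp : z %% p = 0.
  by rewrite /z modn_dvdm ?dvdn_mulr // /c chinese_modl // mod0n.
have zq : z %% q = x %% q.
  by rewrite /z modn_dvdm ?dvdn_mull // /c chinese_modr.
have zlt : z < p * q by rewrite /z ltn_pmod // muln_gt0 hp hq.
have [k Hk] : exists k, z = p * k.
  exists (z %/ p); rewrite {1}(divn_eq z p) zp addn0 mulnC //.
have kq : k < q by nia.
have zx : z <= x by nia.
have : q %| x - z by rewrite -eqn_mod_dvd // zq.
case/dvdnP => j Hj.
exists k, j; lia.
Qed.
Lemma Aval_final p q g (hp : 0 < p) (hq : 0 < q) (cop : coprime p q)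
  (hg : forall x, reflect (exists i j, x = p * i + q * j) (~~ g x)) r :
  r < p -> Aval p g (q * p) r = q * (Aval p g (q * p) r %/ q) /\ Aval p g (q * p) r %/ q < p.
Proof.
move=> hr.
have hcl : forall x, ~~ g x -> ~~ g (x + p).
  move=> x /hg [i [j ->]]; apply/hg; exists i.+1, j; rewrite mulnS; lia.
have [_ I2 I3] := @Aval_inv p g hp hcl (q * p) r hr.
set y := Aval p g (q * p) r in I2 I3 *.
have contra : forall a' b', y - p = p * a' + q * b' -> p <= y -> False.
  move=> a' b' H hy; case: I3 => [h|h]; first by lia.
  have : ~~ g (y - p) by apply/hg; exists a', b'.
  by rewrite h.
have yS : exists i j, y = p * i + q * j.
  case: I2 => [[_ /hg //]|/andP [h1 h2]].
  have : (q - 1) * p <= y - p by nia.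
  case/(@frob p q (y - p) hp hq cop) => a' [b' H]; exfalso; apply: (contra a' b' H); nia.
case: yS => a [b Hy].
case: a Hy => [|a] Hy; last first.
  by exfalso; apply: (contra a b); nia.
rewrite muln0 add0n in Hy.
case: (ltnP b p) => hbp.
  by rewrite Hy mulKn.
exfalso; apply: (contra (q - 1) (b - p)); nia.
Qed.
Definition gS (m n x : nat) : bool := ~~ inS m n x.

Definition stA (n m t : nat) : {ffun 'I_n -> int} :=
  [ffun k : 'I_n => Posz (Aval n (gS m n) t k)].
Definition stB (n m t : nat) : {ffun 'I_m -> int} :=
  [ffun k : 'I_m => Posz (Aval m (gS m n) t k)].

Lemma reflA m n x : 0 < m -> 0 < n ->
  reflect (exists i j, x = n * i + m * j) (~~ gS m n x).
Proof.
move=> hm hn; rewrite /gS negbK; apply: (iffP (@inSP m n x hm hn)).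
  by case=> i [j ->]; exists j, i; rewrite addnC.
by case=> i [j ->]; exists j, i; rewrite addnC.
Qed.

Lemma reflB m n x : 0 < m -> 0 < n ->
  reflect (exists i j, x = m * i + n * j) (~~ gS m n x).
Proof. by move=> hm hn; rewrite /gS negbK; apply: (@inSP m n x hm hn). Qed.

Lemma steps n m (hn : 0 < n) (hm : 0 < m) t :
  clos_refl_trans _ (@weyl_step n m) (stA n m t, stB n m t) (Lambda1 n m).
Proof.
have hclA : forall x, ~~ gS m n x -> ~~ gS m n (x + n).
  move=> x /(@reflA m n _ hm hn) [i [j ->]]; apply/(@reflA m n _ hm hn); exists i.+1, j; rewrite mulnS; lia.
have hclB : forall x, ~~ gS m n x -> ~~ gS m n (x + m).
  move=> x /(@reflB m n _ hm hn) [i [j ->]]; apply/(@reflB m n _ hm hn); exists i.+1, j; rewrite mulnS; lia.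
elim: t => [|t IH].
  have -> : (stA n m 0, stB n m 0) = Lambda1 n m.
    by rewrite /Lambda1; congr pair; apply/ffunP => k; rewrite !ffunE.
  exact: rt_refl.
apply: rt_trans IH.
case Hg: (gS m n t); last first.
  have -> : (stA n m t.+1, stB n m t.+1) = (stA n m t, stB n m t).
    by congr pair; apply/ffunP => k; rewrite !ffunE /= Hg.
  exact: rt_refl.
pose i := Ordinal (ltn_pmod t hn).
pose j := Ordinal (ltn_pmod t hm).
have Ai : Aval n (gS m n) t i = t by apply: Aval_gap.
have Bj : Aval m (gS m n) t j = t by apply: Aval_gap.
have -> : (stA n m t, stB n m t) =
   ([ffun k => if k == i then (stA n m t.+1 k - Posz n)%R else stA n m t.+1 k],
    [ffun k => if k == j then (stB n m t.+1 k - Posz m)%R else stB n m t.+1 k]).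
  congr pair; apply/ffunP => k; rewrite !ffunE /= Hg /=.
    have -> : (k == i) = (nat_of_ord k == t %% n) by [].
    by case: ifP => H; rewrite ?H ?PoszD ?addrK.
  have -> : (k == j) = (nat_of_ord k == t %% m) by [].
  by case: ifP => H; rewrite ?H ?PoszD ?addrK.
apply: rt_step; apply: ws_tau_inv.
rewrite !ffunE /= Hg /= !eqxx Ai Bj !PoszD.
by rewrite opprD addrACA subrr add0r.
Qed.
Lemma hclA m n (hm : 0 < m) (hn : 0 < n) : forall x, ~~ gS m n x -> ~~ gS m n (x + n).
Proof.
move=> x /(@reflA m n _ hm hn) [i [j ->]]; apply/(@reflA m n _ hm hn); exists i.+1, j; rewrite mulnS; lia.
Qed.
Lemma hclB m n (hm : 0 < m) (hn : 0 < n) : forall x, ~~ gS m n x -> ~~ gS m n (x + m).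
Proof.
move=> x /(@reflB m n _ hm hn) [i [j ->]]; apply/(@reflB m n _ hm hn); exists i.+1, j; rewrite mulnS; lia.
Qed.

Theorem corollary6p5 (n m : nat) :
  (0 < n)%N -> (n < m)%N -> coprime m n ->
  in_weyl_orbit (Lambda0 n m) (Lambda1 n m).
Proof.
move=> hn hnm cop.
have hm : 0 < m by lia.
rewrite /in_weyl_orbit.
set T := m * n.
apply: (@rt_trans _ _ _ (stA n m T, stB n m T)); last first. exact: (@steps n m hn hm T).
have hA : forall k : 'I_n, Aval n (gS m n) T k = m * (Aval n (gS m n) T k %/ m)
                            /\ Aval n (gS m n) T k %/ m < n.
  move=> k; apply: (@Aval_final n m (gS m n) hn hm _ (fun x => @reflA m n x hm hn) k (ltn_ord k)).
  by rewrite coprime_sym.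
have hB : forall k : 'I_m, Aval m (gS m n) T k = n * (Aval m (gS m n) T k %/ n)
                            /\ Aval m (gS m n) T k %/ n < m.
  move=> k; rewrite /T mulnC.
  exact: (@Aval_final m n (gS m n) hm hn cop (fun x => @reflB m n x hm hn) k (ltn_ord k)).
have modA : forall k : 'I_n, Aval n (gS m n) T k %% n = k.
  by move=> k; case: (@Aval_inv n (gS m n) hn (@hclA m n hm hn) T k (ltn_ord k)).
have modB : forall k : 'I_m, Aval m (gS m n) T k %% m = k.
  by move=> k; case: (@Aval_inv m (gS m n) hm (@hclB m n hm hn) T k (ltn_ord k)).
have sP : forall k : 'I_n, n - 1 - Aval n (gS m n) T k %/ m < n by move=> k; apply: leq_ltn_trans (leq_subr _ _) _; lia.
pose f k := Ordinal (sP k).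
have finj : injective f.
  move=> k1 k2 /(congr1 val) /= H.
  have [H1 H1'] := hA k1; have [H2 H2'] := hA k2.
  have E : Aval n (gS m n) T k1 = Aval n (gS m n) T k2.
    rewrite H1 H2; congr (_ * _); lia.
  by apply: val_inj; rewrite /= -modA -(modA k2) E.
have sP' : forall k : 'I_m, Aval m (gS m n) T k %/ n < m by move=> k; case: (hB k).
pose f' k := Ordinal (sP' k).
have finj' : injective f'.
  move=> k1 k2 /(congr1 val) /= H.
  have [H1 H1'] := hB k1; have [H2 H2'] := hB k2.
  have E : Aval m (gS m n) T k1 = Aval m (gS m n) T k2.
    by rewrite H1 H2 H.
  by apply: val_inj; rewrite /= -modB -(modB k2) E.
pose s := perm finj.
pose s' := perm finj'.
apply: (@rt_trans _ _ _ ([ffun k => (Lambda0 n m).1 (s k)], (Lambda0 n m).2)).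
  by apply: rt_step; rewrite {1}/Lambda0; apply: ws_perm_a.
apply: (@rt_trans _ _ _ ([ffun k => (Lambda0 n m).1 (s k)], [ffun k => (Lambda0 n m).2 (s' k)])).
  by apply: rt_step; apply: ws_perm_b.
have -> : ([ffun k => (Lambda0 n m).1 (s k)], [ffun k => (Lambda0 n m).2 (s' k)])
          = (stA n m T, stB n m T).
  congr pair; apply/ffunP => k; rewrite !ffunE /= !permE /=.
    have [H1 H1'] := hA k; rewrite subKn; first by rewrite -H1.
    by move: H1'; set d := _ %/ _; lia.
  by have [H1 H1'] := hB k; rewrite -H1.
exact: rt_refl.
Qed.
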